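(* Consider the setting: $x_l=\theta+\sigma\eta_l$ with $\theta\in(0,\theta_R]$, $\sigma>0$, $\eta_l$ i.i.d. symmetric about zero with real characteristic function $\varphi_\eta$; power $P>0$, channel noise variance $\sigma_\nu^2\ge 0$, and design parameter $\omega\in(0,2\pi/\theta_R]$. Define $\mathrm{AsV}_{\hat\theta}(\omega)=\dfrac{P+\sigma_\nu^2-P\varphi_\eta(2\sigma\omega)}{2P\omega^2\varphi_\eta^2(\sigma\omega)}$, $\mathrm{AsV}_{\hat\sigma}(\omega)=\dfrac{P+\sigma_\nu^2-2P\varphi_\eta^2(\sigma\omega)+P\varphi_\eta(2\sigma\omega)}{2P\left[\frac{\partial\varphi_\eta(\sigma\omega)}{\partial\sigma}\right]^2}$, and, with $\gamma=\theta^2/\sigma^2$, $\mathrm{AsV}_{\hat\gamma}(\omega)=\dfrac{4\gamma}{\sigma^2}\left[\mathrm{AsV}_{\hat\theta}(\omega)+\gamma\,\mathrm{AsV}_{\hat\sigma}(\omega)\right]$. Let $\omega_\theta^*,\omega_\sigma^*,\omega_\gamma^*$ denote the minimizers over $\omega\in(0,2\pi/\theta_R]$ (understood as the limiting endpoint $0$ when the infimum is approached as $\omega\to0$) of $\mathrm{AsV}_{\hat\theta}$, $\mathrm{AsV}_{\hat\sigma}$, $\mathrm{AsV}_{\hat\gamma}$ respectively. If $\mathrm{AsV}_{\hat\theta}$ and $\mathrm{AsV}_{\hat\sigma}$ are differentiable quasi-convex functions of $\omega$ on $(0,2\pi/\theta_R]$, then $\omega_\gamma^*$ lies between $\omega_\theta^*$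 and $\omega_\sigma^*$.
   Context: A univariate function $f$ on $(0,2\pi/\theta_R]$ is called quasi-convex if either (c1) $f$ is monotone (non-decreasing or non-increasing), or (c2) $f$ has a global minimum at some $\omega^*$ such that $f$ is non-increasing for $\omega\le\omega^*$ and non-decreasing for $\omega\ge\omega^*$. *)

(* Defs.v *)
From HB Require Import structures.
From mathcomp Require Import all_boot all_order all_algebra.
From mathcomp Require Import all_classical all_reals all_analysis.
Set Implicit Arguments. Unset Strict Implicit. Unset Printing Implicit Defensive.
Import Order.TTheory GRing.Theory Num.Theory.
Import numFieldNormedType.Exports.
Local Open Scope classical_set_scope.
Local Open Scope ring_scope.

Definition symmetric_law (R : realType) (P : probability R R) : Prop :=
  forall A : set R, measurable A -> P ((fun x => - x) @^-1` A) = P A.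

(* Real characteristic function of a symmetric law: E[cos (t eta)]
   (= E[exp(i t eta)] since the imaginary part vanishes by symmetry). *)
Definition charfun (R : realType) (P : probability R R) (t : R) : R :=
  \int[P]_x cos (t * x).

Definition AsV_theta (R : realType) (P : probability R R)
    (sigma Pw snu2 : R) (w : R) : R :=
  (Pw + snu2 - Pw * charfun P (2 * sigma * w)) /
  (2 * Pw * w ^+ 2 * (charfun P (sigma * w)) ^+ 2).

Definition dphi_dsigma (R : realType) (P : probability R R) (sigma w : R) : R :=
  derive1 (fun s => charfun P (s * w)) sigma.

Definition AsV_sigma (R : realType) (P : probability R R)
    (sigma Pw snu2 : R) (w : R) : R :=
  (Pw + snu2 - 2 * Pw * (charfun P (sigma * w)) ^+ 2
      + Pw * charfun P (2 * sigma * w)) /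
  (2 * Pw * (dphi_dsigma P sigma w) ^+ 2).

Definition AsV_gamma (R : realType) (P : probability R R)
    (theta sigma Pw snu2 : R) (w : R) : R :=
  let gamma := theta ^+ 2 / sigma ^+ 2 in
  4 * gamma / sigma ^+ 2 *
    (AsV_theta P sigma Pw snu2 w + gamma * AsV_sigma P sigma Pw snu2 w).

Definition quasi_convex_on (R : realType) (W : R) (f : R -> R) : Prop :=
  (forall x y, 0 < x -> x <= y -> y <= W -> f x <= f y)
  \/ (forall x y, 0 < x -> x <= y -> y <= W -> f y <= f x)
  \/ (exists2 ws, 0 < ws <= W &
        (forall x, 0 < x <= W -> f ws <= f x)
        /\ (forall x y, 0 < x -> x <= y -> y <= ws -> f y <= f x)
        /\ (forall x y, ws <= x -> x <= y -> y <= W -> f x <= f y)).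

(* m is a minimizer of f over (0, W]: either an attained minimum in (0, W],
   or m = 0 when the infimum over (0, W] is approached as omega -> 0+
   (i.e. limsup_{omega -> 0+} f omega <= inf_{(0,W]} f). *)
Definition is_minimizer (R : realType) (W : R) (f : R -> R) (m : R) : Prop :=
  (0 < m <= W /\ forall x, 0 < x <= W -> f m <= f x)
  \/ (m = 0 /\ forall x, 0 < x <= W -> forall e : R, 0 < e ->
        exists2 d : R, 0 < d & forall y, 0 < y -> y < d -> y <= W ->
          f y <= f x + e).

(* Main.v *)
Require Import Defs.
From HB Require Import structures.
From mathcomp Require Import all_boot all_order all_algebra.
From mathcomp Require Import all_classical all_reals all_analysis.
From mathcomp Require Import measurable_realfun.
From mathcomp Require Import ring lra.
Import Order.TTheory GRing.Theory Num.Theory.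
Import numFieldNormedType.Exports.
Local Open Scope classical_set_scope.
Local Open Scope ring_scope.

Section Int.
Variables (R : realType) (P : probability R R).

Lemma cb_int (g : R -> R) (M : R) : continuous g -> (forall x, `|g x| <= M) ->
  P.-integrable setT (EFin \o g).
Proof.
move=> cg bg; apply: measurable_bounded_integrable => //.
- by apply: (le_lt_trans (probability_le1 P measurableT)); exact: ltry.
- exact: continuous_measurable_fun.
- exists M; split; first by rewrite num_real.
  move=> y My x _; apply: le_trans (bg x) _; exact: ltW.
Qed.

Lemma cos_cont (t : R) : continuous (fun x : R => cos (t * x)).
Proof.
move=> x; apply: continuous_comp; last exact: continuous_cos.
by apply: cvgMr; exact: cvg_id.
Qed.

Lemma cos_int (t : R) : P.-integrable setT (EFin \o (fun x => cos (t * x))).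
Proof.
apply: (@cb_int _ 1); first exact: cos_cont.
move=> x; rewrite ler_norml cos_le1 cos_geN1; done.
Qed.

Lemma charfun_le1 t : charfun P t <= 1.
Proof.
rewrite /charfun; apply: (@le_trans _ _ (\int[P]_x (1:R))).
  apply: le_Rintegral => //; [exact: cos_int| ].
    apply: (@cb_int _ 1); [exact: cst_continuous | by move=> x; rewrite normr1].
rewrite Rintegral_cst // mul1r.
have h : P [set: R] = 1%E by exact: probability_setT.
by rewrite (_ : fine _ = 1) //; exact: (congr1 fine h).
Qed.


Lemma aff_cont u b k : continuous (fun x : R => b * cos (u * x) + k).
Proof.
move=> x; apply: cvgD; last exact: cvg_cst.
apply: cvgM; [exact: cvg_cst | exact: cos_cont].
Qed.

Lemma aff_int u b k : P.-integrable setT (EFin \o (fun x => b * cos (u * x) + k)).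
Proof.
apply: (@cb_int _ (`|b| + `|k|)); first exact: aff_cont.
move=> x; apply: le_trans (ler_normD _ _) _; apply: lerD => //.
rewrite normrM; apply: ler_piMr => //.
by rewrite ler_norml cos_le1 cos_geN1.
Qed.

Lemma PsetT1 : fine (P setT) = 1.
Proof.
have h : P [set: R] = 1%E by exact: probability_setT.
by rewrite h.
Qed.

Lemma aff_Rint u b k : \int[P]_x (b * cos (u * x) + k) = b * charfun P u + k.
Proof.
rewrite RintegralD //.
- rewrite RintegralZl //; last exact: cos_int.
  rewrite Rintegral_cst // (_ : fine _ = 1) ?mulr1 //.
  have h : P [set: R] = 1%E by exact: probability_setT.
  exact: (congr1 fine h).
- apply: (@cb_int _ `|b|).
    by move=> x; apply: cvgM; [exact: cvg_cst | exact: cos_cont].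
  move=> x; rewrite normrM; apply: ler_piMr => //.
  by rewrite ler_norml cos_le1 cos_geN1.
- apply: (@cb_int _ `|k|); [exact: cst_continuous | by move=> x].
Qed.

Lemma cos_double (t x : R) : cos ((2 * t) * x) = 2 * cos (t * x) ^+ 2 - 1.
Proof.
rewrite (_ : 2 * t * x = t * x + t * x); last by ring.
rewrite cosD.
have := cos2Dsin2 (t * x).
move=> h; rewrite -!expr2; lra.
Qed.

Lemma charfun_jensen (t : R) : 2 * charfun P t ^+ 2 - 1 <= charfun P (2 * t).
Proof.
set phi := charfun P t.
have H0 : 0 <= \int[P]_x ((cos (t * x) - phi) ^+ 2).
  by apply: Rintegral_ge0 => x _; exact: sqr_ge0.
have HE : \int[P]_x ((cos (t * x) - phi) ^+ 2) =
   \int[P]_x ((2^-1 * cos ((2 * t) * x) + 0) + ((-2 * phi) * cos (t * x) + (2^-1 + phi ^+ 2))).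
  by apply: eq_Rintegral => x _; rewrite cos_double; field.
move: H0; rewrite HE RintegralD //; [|exact: aff_int|exact: aff_int].
rewrite !aff_Rint -/phi.
set q := charfun P (2 * t).
rewrite ?expr2 => H0; nra.
Qed.

End Int.

Section Abs.
Variables (R : realType) (W : R).
Hypothesis hW : 0 < W.

Definition Uni (f : R -> R) (m : R) :=
  (forall x y, 0 < x -> x <= y -> y <= m -> y <= W -> f y <= f x) /\
  (forall x y, m <= x -> x <= y -> y <= W -> 0 < x -> f x <= f y).

Lemma lsup (f : R -> R) p x : 0 < x <= W -> 0 < p <= W ->
  (forall e : R, 0 < e -> exists2 d : R, 0 < d & forall y, 0 < y -> y < d -> y <= W ->
          f y <= f p + e) ->
  (forall z, 0 < z -> z <= x -> f x <= f z) -> f x <= f p.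
Proof.
move=> /andP[x0 xW] /andP[p0 pW] hl hd.
apply/ler_addgt0Pr => e e0.
have [d d0 hd'] := hl e e0.
pose z := Num.min x (d / 2).
have z0 : 0 < z by rewrite /z lt_min x0 divr_gt0.
have zx : z <= x by rewrite /z ge_min lexx.
have zd : z < d by rewrite /z gt_min; apply/orP; right; lra.
apply: le_trans (hd z z0 zx) _.
apply: hd' => //; exact: le_trans zx xW.
Qed.

Lemma qc_Uni f m : quasi_convex_on W f -> is_minimizer W f m -> Uni f m.
Proof.
move=> hq [[/andP[m0 mW] hmin]|[-> hl]].
- case: hq => [Hinc|[Hdec|[w0 /andP[w00 w0W] [Hmin0 [H2 H3]]]]]; split.
  + move=> x y x0 xy ym yW; apply: le_trans (Hinc y m _ ym mW) _.
      exact: lt_le_trans xy.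
    apply: hmin; rewrite x0 /=; exact: le_trans xy yW.
  + by move=> x y mx xy yW x0; apply: Hinc.
  + by move=> x y x0 xy ym yW; apply: Hdec.
  + move=> x y mx xy yW x0; apply: le_trans (Hdec m x m0 mx (le_trans xy yW)) _.
    apply: hmin; rewrite yW andbT; exact: lt_le_trans xy.
  + move=> x y x0 xy ym yW; have [yw|wy] := leP y w0.
      exact: H2.
    apply: le_trans (H3 y m (ltW wy) ym mW) _.
    apply: hmin; rewrite x0 /=; exact: le_trans xy yW.
  + move=> x y mx xy yW x0; have [wx|xw] := leP w0 x.
      exact: H3.
    apply: le_trans (H2 m x m0 mx (ltW xw)) _.
    apply: hmin; rewrite yW andbT; exact: lt_le_trans xy.
- split.
    by move=> x y x0 xy y0; have := lt_le_trans x0 (le_trans xy y0); rewrite ltxx.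
  move=> x y _ xy yW x0.
  have y0 : 0 < y by exact: lt_le_trans xy.
  case: hq => [Hinc|[Hdec|[w0 /andP[w00 w0W] [Hmin0 [H2 H3]]]]].
  + exact: Hinc.
  + apply: (@lsup f y x); first by rewrite x0 (le_trans xy yW).
      by rewrite y0.
      move=> e e0; have [d d0 hd] := hl y (ltac:(by rewrite y0 yW)) e e0.
      by exists d.
    move=> z z0 zx; apply: Hdec => //; exact: le_trans xy yW.
  + have [wx|xw] := leP w0 x; first exact: H3.
    apply: le_trans (Hmin0 y _); last by rewrite y0.
    apply: (@lsup f w0 x); first by rewrite x0 (le_trans xy yW).
      by rewrite w00.
      move=> e e0; have [d d0 hd] := hl w0 (ltac:(by rewrite w00 w0W)) e e0.
      by exists d.
    move=> z z0 zx; apply: H2 => //; exact: ltW.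
Qed.


Definition almost (h : R -> R) := forall e : R, 0 < e -> exists2 d : R, 0 < d &
  forall z y, 0 < z -> z <= y -> y < d -> h y <= h z + e.

Lemma almostP (h F G : R -> R) (al be b : R) : 0 < al -> 0 <= be -> 0 < b <= W ->
  (forall x, h x = al * F x + be * G x) ->
  (forall x, 0 < x <= W -> 0 <= F x) ->
  (forall x y, 0 < x -> x <= y -> y <= W -> F x <= F y) ->
  (forall x y, 0 < x -> x <= y -> y <= b -> G y <= G x) -> almost h.
Proof.
move=> al0 be0 /andP[b0 bW] hE F0 Finc Gdec e e0.
pose S := [set F x | x in [set x | 0 < x <= W]].
have hS : has_inf S.
  split; first by exists (F W); exists W => //=; rewrite hW lexx.
  by exists 0 => _ [x hx <-]; apply: F0.
have [_ [x0 /andP[x00 x0W] <-] hx0] := inf_adherent (divr_gt0 e0 al0) hS.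
exists (Num.min x0 b); first by rewrite lt_min x00 b0.
move=> z y z0 zy; rewrite lt_min => /andP[yx0 yb].
have Fz : inf S <= F z.
  apply: (ge_inf hS.2); exists z => //; rewrite /= z0 /=.
  by apply: le_trans bW; apply: le_trans (ltW yb); exact: zy.
have Fy : F y <= F x0 by apply: Finc => //; [exact: lt_le_trans zy | exact: ltW].
have Gy : G y <= G z by apply: Gdec => //; exact: ltW.
have h1 : al * (F y - F z) <= al * (e / al).
  by apply: ler_wpM2l; [exact: ltW | lra].
rewrite [al * (e / al)]mulrC divfK in h1; last by rewrite gt_eqF.
have h2 : be * (G y - G z) <= 0 by apply: mulr_ge0_le0 => //; lra.
rewrite !hE; lra.
Qed.

Lemma cont_within (h : R -> R) a b : 0 < a -> b <= W ->
  (forall x, 0 < x <= W -> {for x, continuous h}) ->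
  {within `[a, b], continuous h}.
Proof.
move=> a0 bW hc; apply/continuous_in_subspaceT => z /[1!inE].
rewrite /= in_itv /= => /andP[az zb]; apply: hc.
by rewrite (lt_le_trans a0 az) (le_trans zb bW).
Qed.

Lemma Lmin (h : R -> R) b : 0 < b <= W ->
  (forall x, 0 < x <= W -> {for x, continuous h}) ->
  (forall x y, b <= x -> x <= y -> y <= W -> h x <= h y) ->
  almost h ->
  exists2 wg, is_minimizer W h wg & 0 <= wg <= b.
Proof.
move=> /andP[b0 bW] hc hinc hal.
have [[p [/andP[p0 pb] hp]]|no] :=
  pselect (exists p, 0 < p <= b /\ forall q, 0 < q <= b -> h p <= h q).
  exists p; last by rewrite (ltW p0) pb.
  left; split; first by rewrite p0 (le_trans pb bW).
  move=> x /andP[x0 xW]; have [xb|bx] := leP x b; first by apply: hp; rewrite x0.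
  apply: le_trans (hp b _) _; first by rewrite b0 lexx.
  by apply: hinc => //; exact: ltW.
have Hno : forall p, 0 < p <= b -> exists q, 0 < q <= b /\ h q < h p.
  move=> p hp; apply: contrapT => hn; apply: no; exists p; split => // q hq.
  rewrite leNgt; apply/negP => hlt; apply: hn; exists q; by split.
exists 0; last by rewrite lexx (ltW b0).
right; split => // x /andP[x0 xW] e e0.
have [d0 d00 hd] := hal e e0.
exists (Num.min d0 b); first by rewrite lt_min d00 b0.
move=> y y0; rewrite lt_min => /andP[yd yb] yW.
pose x' := Num.min x b.
have x'0 : 0 < x' by rewrite /x' lt_min x0 b0.
have x'b : x' <= b by rewrite /x' ge_min lexx orbT.
have hx' : h x' <= h x.
  rewrite /x'; have [xb|bx] := leP x b; first by rewrite lexx.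
  by apply: hinc => //; exact: ltW.
apply: le_trans (_ : h x' + e <= h x + e); last by rewrite lerD2r.
have [xy|yx] := ltP x' y.
  by apply: hd => //; exact: ltW.
have [p pI hp] := EVT_min (ltW yb) (@cont_within h y b y0 bW hc).
move: (pI); rewrite in_itv /= => /andP[yp pb].
have [q [/andP[q0 qb] hq]] := Hno p (ltac:(by rewrite (lt_le_trans y0 yp) pb)).
have qy : q < y.
  rewrite ltNge; apply/negP => yq.
  have := hp q (ltac:(by rewrite in_itv /= yq qb)); rewrite leNgt hq //.
have := hd q y q0 (ltW qy) yd.
have := hp x' (ltac:(by rewrite in_itv /= yx x'b)).
move=> h1 h2; apply: (le_trans h2); rewrite lerD2r.
exact: le_trans (ltW hq) h1.
Qed.


Lemma min_range f m : is_minimizer W f m -> 0 <= m <= W.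
Proof.
case=> [[/andP[m0 mW] _]|[-> _]]; first by rewrite (ltW m0) mW.
by rewrite lexx ltW.
Qed.

Lemma main_abs (f g : R -> R) (c k wt ws : R) :
  0 < c -> 0 < k ->
  (forall x, 0 < x <= W -> {for x, continuous f}) ->
  (forall x, 0 < x <= W -> {for x, continuous g}) ->
  (forall x, 0 <= f x) -> (forall x, 0 <= g x) ->
  quasi_convex_on W f -> quasi_convex_on W g ->
  is_minimizer W f wt -> is_minimizer W g ws ->
  exists2 wg, is_minimizer W (fun w => c * (f w + k * g w)) wg &
    Num.min wt ws <= wg <= Num.max wt ws.
Proof.
move=> c0 k0 cf cg f0 g0 qf qg mf mg.
have [Uf1 Uf2] := @qc_Uni f wt qf mf.
have [Ug1 Ug2] := @qc_Uni g ws qg mg.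
have /andP[wt0 wtW] := @min_range f wt mf.
have /andP[ws0 wsW] := @min_range g ws mg.
set h := (fun w => c * (f w + k * g w)).
have hc : forall x, 0 < x <= W -> {for x, continuous h}.
  move=> x hx; apply: cvgM; first exact: cvg_cst.
  apply: cvgD; first exact: cf.
  apply: cvgM; first exact: cvg_cst.
  exact: cg.
have hmono : forall x y, f x <= f y -> g x <= g y -> h x <= h y.
  move=> x y fxy gxy; rewrite /h ler_wpM2l ?(ltW c0) //.
  by apply: lerD => //; rewrite ler_wpM2l ?(ltW k0).
have H1h : forall x y, 0 < x -> x <= y -> y <= Num.min wt ws -> y <= W -> h y <= h x.
  move=> x y x0 xy; rewrite le_min => /andP[yt ys] yW.
  by apply: hmono; [apply: Uf1 | apply: Ug1].
have H2h : forall x y, Num.max wt ws <= x -> x <= y -> y <= W -> 0 < x -> h x <= h y.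
  move=> x y; rewrite ge_max => /andP[tx sx] xy yW x0.
  by apply: hmono; [apply: Uf2 | apply: Ug2].
have [t0|t0] := ltP 0 wt; have [s0|s0] := ltP 0 ws.
- pose a := Num.min wt ws; pose b := Num.max wt ws.
  have a0 : 0 < a by rewrite /a lt_min t0 s0.
  have ab : a <= b by rewrite /a /b ge_min le_max lexx.
  have bW : b <= W by rewrite /b ge_max wtW wsW.
  have [p pI hp] := EVT_min ab (@cont_within h a b a0 bW hc).
  move: (pI); rewrite in_itv /= => /andP[ap pb].
  exists p; last by rewrite ap pb.
  left; split; first by rewrite (lt_le_trans a0 ap) (le_trans pb bW).
  move=> x /andP[x0 xW].
  have [xa|ax] := ltP x a.
    apply: le_trans (hp a _) _; first by rewrite in_itv /= lexx ab.
    apply: H1h => //; [exact: ltW | exact: le_trans ab bW].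
  have [bx|xb] := ltP b x.
    apply: le_trans (hp b _) _; first by rewrite in_itv /= lexx ab.
    apply: H2h => //; [exact: ltW | exact: lt_le_trans a0 ab].
  by apply: hp; rewrite in_itv /= ax xb.
- have es : ws = 0 by apply/eqP; rewrite eq_le s0 ws0.
  rewrite es.
  have -> : Num.min wt 0 = 0 by apply/eqP; rewrite eq_le ge_min lexx orbT le_min wt0 lexx.
  have -> : Num.max wt 0 = wt by apply/eqP; rewrite eq_le ge_max lexx wt0 le_max lexx.
  have hal : almost h.
    apply: (@almostP h g f (c * k) c wt) => //.
    - exact: mulr_gt0.
    - exact: ltW.
    - by rewrite t0.
    - by move=> x; rewrite /h; ring.
    - by move=> x y x0 xy yW; apply: Ug2 => //; rewrite es ltW.
    - by move=> x y x0 xy yt; apply: Uf1 => //; exact: le_trans wtW.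
  have mh : forall x y, wt <= x -> x <= y -> y <= W -> h x <= h y.
    move=> x y tx xy yW; apply: H2h => //.
      by rewrite ge_max tx es (le_trans wt0 tx).
    exact: lt_le_trans tx.
  by apply: Lmin; rewrite ?t0 ?wtW.
- have et : wt = 0 by apply/eqP; rewrite eq_le t0 wt0.
  rewrite et.
  have -> : Num.min 0 ws = 0 by apply/eqP; rewrite eq_le ge_min lexx le_min ws0 lexx.
  have -> : Num.max 0 ws = ws by apply/eqP; rewrite eq_le ge_max lexx ws0 le_max lexx orbT.
  have hal : almost h.
    apply: (@almostP h f g c (c * k) ws) => //.
    - by apply: mulr_ge0; exact: ltW.
    - by rewrite s0.
    - by move=> x; rewrite /h; ring.
    - by move=> x y x0 xy yW; apply: Uf2 => //; rewrite et ltW.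
    - by move=> x y x0 xy yt; apply: Ug1 => //; exact: le_trans wsW.
  have mh : forall x y, ws <= x -> x <= y -> y <= W -> h x <= h y.
    move=> x y sx xy yW; apply: H2h => //.
      by rewrite ge_max sx et (le_trans ws0 sx).
    exact: lt_le_trans sx.
  by apply: Lmin; rewrite ?s0 ?wsW.
- have et : wt = 0 by apply/eqP; rewrite eq_le t0 wt0.
  have es : ws = 0 by apply/eqP; rewrite eq_le s0 ws0.
  exists 0; last by rewrite et es /Num.min /Num.max ltxx lexx.
  right; split => // x /andP[x0 xW] e e0; exists x => // y y0 yx yW.
  apply: le_trans (_ : h x <= h x + e); last by rewrite lerDl ltW.
  apply: H2h => //; [by rewrite et es /Num.max ltxx ltW | exact: ltW].
Qed.

End Abs.

Theorem theorem2 (R : realType) (P : probability R R)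
    (theta thetaR sigma Pw snu2 : R) :
  symmetric_law P ->
  0 < thetaR -> 0 < theta -> theta <= thetaR ->
  0 < sigma -> 0 < Pw -> 0 <= snu2 ->
  let W := 2 * pi / thetaR in
  (* the asymptotic variances are well defined on (0, W] *)
  (forall w, 0 < w <= W -> charfun P (sigma * w) != 0) ->
  (forall w, 0 < w <= W -> derivable (fun s : R => charfun P (s * w)) sigma 1) ->
  (forall w, 0 < w <= W -> dphi_dsigma P sigma w != 0) ->
  (* differentiable and quasi-convex on (0, W] *)
  (forall w, 0 < w <= W -> derivable (AsV_theta P sigma Pw snu2) w 1) ->
  (forall w, 0 < w <= W -> derivable (AsV_sigma P sigma Pw snu2) w 1) ->
  quasi_convex_on W (AsV_theta P sigma Pw snu2) ->
  quasi_convex_on W (AsV_sigma P sigma Pw snu2) ->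
  forall wt ws,
    is_minimizer W (AsV_theta P sigma Pw snu2) wt ->
    is_minimizer W (AsV_sigma P sigma Pw snu2) ws ->
    exists2 wg, is_minimizer W (AsV_gamma P theta sigma Pw snu2) wg &
      Num.min wt ws <= wg <= Num.max wt ws.
Proof.
move=> _ tR0 th0 _ s0 P0 n0 W _ _ _ dT dS qT qS wt ws mT mS.
have hW : 0 < W by rewrite /W divr_gt0 // mulr_gt0 // pi_gt0.
have g0 : 0 < theta ^+ 2 / sigma ^+ 2 by rewrite divr_gt0 // exprn_gt0.
have c0 : 0 < 4 * (theta ^+ 2 / sigma ^+ 2) / sigma ^+ 2.
  by rewrite divr_gt0 ?exprn_gt0 // mulr_gt0.
apply: (@main_abs R W hW _ _ _ _ wt ws c0 g0) => //.
- move=> x hx; apply/differentiable_continuous; rewrite -derivable1_diffP.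
  exact: dT.
- move=> x hx; apply/differentiable_continuous; rewrite -derivable1_diffP.
  exact: dS.
- move=> x; rewrite /AsV_theta; apply: divr_ge0.
    have := @charfun_le1 R P (2 * sigma * x); nra.
  apply: mulr_ge0; last exact: sqr_ge0.
  apply: mulr_ge0; last exact: sqr_ge0.
  by apply: mulr_ge0 => //; exact: ltW.
- move=> x; rewrite /AsV_sigma; apply: divr_ge0.
    have := @charfun_jensen R P (sigma * x); rewrite mulrA.
    set a := charfun P (sigma * x); set b := charfun P (2 * sigma * x).
    rewrite ?expr2; nra.
  apply: mulr_ge0; last exact: sqr_ge0.
  by apply: mulr_ge0 => //; exact: ltW.
Qed.
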